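(* Let $k$ be a commutative ring and $A$ a $k$-algebra. Let $(\mathcal D\overset{l}{\underset{r}{\leftrightarrows}}\mathcal C,\theta)$ be an $A$-coring twisting datum, where $\mathcal C=(C,\Delta_C,e_C)$ and $\mathcal D=(D,\Delta_D,e_D)$. Suppose that $e_D\circ\theta^{-1}$ is invertible in the convolution algebra ${}_A\mathrm{Hom}_A(C,A)$ and $e_C\circ\theta$ is invertible in the convolution algebra ${}_A\mathrm{Hom}_A(D,A)$. Then the $A$-corings $\mathcal C$ and $\mathcal D$ are isomorphic.
   Context: An $A$-coring $(C,\Delta_C,e_C)$ is an $A$-bimodule $C$ with $A$-bimodule maps $\Delta_C:C\to C\otimes_AC$ (coassociative) and $e_C:C\to A$ (counital). A map of $A$-corings is an $A$-bimodule map compatible with comultiplications and counits. An $A$-coring twisting datum consists of $A$-corings $\mathcal C,\mathcal D$, $A$-coring maps $l:D\to C$ and $r:C\to D$, and an isomorphism of $\mathcal D$-$\mathcal C$-bicomodules $\theta:D^l\to{}^rC$, where $D^l$ is $D$ with left $\mathcal D$-coaction $\Delta_D$ and right $\mathcal C$-coaction $(D\otimes_Al)\Delta_D$, and ${}^rC$ is $C$ with left $\mathcal D$-coaction $(r\otimes_AC)\Delta_C$ and right $\mathcal C$-coaction $\Delta_C$. For an $A$-coring $C$, ${}_A\mathrm{Hom}_A(C,A)$ denotes the $A$-bimodule maps $C\to A$, an algebra under the convolution product $f*g=\mu_A\circ(f\otimes_Ag)\circ\Delta_C$ (with $\mu_A:A\otimes_AA\to A$ the multiplication) and unit $e_C$.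 *)

(* Defs.v *)
(* Corings over a k-algebra A, with balanced tensor products
   over A presented as formal sums modulo the (inductively generated)
   tensor-product relations. *)
From HB Require Import structures.
From mathcomp Require Import all_boot all_algebra.
Set Implicit Arguments. Unset Strict Implicit. Unset Printing Implicit Defensive.
Import GRing.Theory.
Local Open Scope ring_scope.

Section Corings.
Variables (k : comPzRingType) (A : algType k).

Record bimod := Bimod {
  bm_car :> zmodType;
  bm_l : A -> bm_car -> bm_car;
  bm_r : bm_car -> A -> bm_car;
  bm_lD : forall a m m', bm_l a (m + m') = bm_l a m + bm_l a m';
  bm_lDa : forall a b m, bm_l (a + b) m = bm_l a m + bm_l b m;
  bm_l1 : forall m, bm_l 1 m = m;
  bm_lM : forall a b m, bm_l (a * b) m = bm_l a (bm_l b m);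
  bm_rD : forall a m m', bm_r (m + m') a = bm_r m a + bm_r m' a;
  bm_rDa : forall a b m, bm_r m (a + b) = bm_r m a + bm_r m b;
  bm_r1 : forall m, bm_r m 1 = m;
  bm_rM : forall a b m, bm_r m (a * b) = bm_r (bm_r m a) b;
  bm_lr : forall a b m, bm_l a (bm_r m b) = bm_r (bm_l a m) b;
  bm_central : forall (x : k) m, bm_l (x%:A) m = bm_r m (x%:A)
}.

Definition bimod_map (M N : bimod) (f : M -> N) : Prop :=
  [/\ forall m m', f (m + m') = f m + f m',
      forall a m, f (bm_l a m) = bm_l a (f m)
    & forall a m, f (bm_r m a) = bm_r (f m) a].

Definition bimod_mapA (M : bimod) (f : M -> A) : Prop :=
  [/\ forall m m', f (m + m') = f m + f m',
      forall a m, f (bm_l a m) = a * f m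
    & forall a m, f (bm_r m a) = f m * a].

(* M (x)_A N : elements represented by formal sums (seq of pairs);
   teq2 is the equivalence "represent the same element of M (x)_A N". *)
Inductive teq2 (M N : bimod) : seq (M * N) -> seq (M * N) -> Prop :=
| teq2_refl s : teq2 s s
| teq2_sym s t : teq2 s t -> teq2 t s
| teq2_trans s t u : teq2 s t -> teq2 t u -> teq2 s u
| teq2_cat s s' t t' : teq2 s t -> teq2 s' t' -> teq2 (s ++ s') (t ++ t')
| teq2_comm s t : teq2 (s ++ t) (t ++ s)
| teq2_addl m m' n : teq2 [:: (m + m', n)] [:: (m, n); (m', n)]
| teq2_addr m n n' : teq2 [:: (m, n + n')] [:: (m, n); (m, n')]
| teq2_zerol n : teq2 [:: (0, n)] [::]
| teq2_zeror m : teq2 [:: (m, 0)] [::]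
| teq2_bal m a n : teq2 [:: (bm_r m a, n)] [:: (m, bm_l a n)].

Inductive teq3 (M N P : bimod) : seq (M * N * P) -> seq (M * N * P) -> Prop :=
| teq3_refl s : teq3 s s
| teq3_sym s t : teq3 s t -> teq3 t s
| teq3_trans s t u : teq3 s t -> teq3 t u -> teq3 s u
| teq3_cat s s' t t' : teq3 s t -> teq3 s' t' -> teq3 (s ++ s') (t ++ t')
| teq3_comm s t : teq3 (s ++ t) (t ++ s)
| teq3_add1 m m' n p : teq3 [:: (m + m', n, p)] [:: (m, n, p); (m', n, p)]
| teq3_add2 m n n' p : teq3 [:: (m, n + n', p)] [:: (m, n, p); (m, n', p)]
| teq3_add3 m n p p' : teq3 [:: (m, n, p + p')] [:: (m, n, p); (m, n, p')]
| teq3_zero1 n p : teq3 [:: (0, n, p)] [::]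
| teq3_zero2 m p : teq3 [:: (m, 0, p)] [::]
| teq3_zero3 m n : teq3 [:: (m, n, 0)] [::]
| teq3_bal12 m a n p : teq3 [:: (bm_r m a, n, p)] [:: (m, bm_l a n, p)]
| teq3_bal23 m n a p : teq3 [:: (m, bm_r n a, p)] [:: (m, n, bm_l a p)].

Definition tl (M N : bimod) (a : A) (s : seq (M * N)) : seq (M * N) :=
  map (fun p => (bm_l a p.1, p.2)) s.
Definition tr (M N : bimod) (s : seq (M * N)) (a : A) : seq (M * N) :=
  map (fun p => (p.1, bm_r p.2 a)) s.

Definition tmap2 (M N M' N' : bimod) (f : M -> M') (g : N -> N')
  (s : seq (M * N)) : seq (M' * N') := map (fun p => (f p.1, g p.2)) s.

(* (Delta (x) C) and (C (x) Delta) applied to an element of C (x)_A C *)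
Definition delta_l (C : bimod) (delta : C -> seq (C * C)) (s : seq (C * C))
  : seq (C * C * C) :=
  flatten (map (fun p => map (fun q => (q.1, q.2, p.2)) (delta p.1)) s).
Definition delta_r (C : bimod) (delta : C -> seq (C * C)) (s : seq (C * C))
  : seq (C * C * C) :=
  flatten (map (fun p => map (fun q => (p.1, q.1, q.2)) (delta p.2)) s).

Definition is_coring (C : bimod) (delta : C -> seq (C * C)) (eps : C -> A)
  : Prop :=
  (forall x y, teq2 (delta (x + y)) (delta x ++ delta y)) /\
  (forall a x, teq2 (delta (bm_l a x)) (tl a (delta x))) /\
  (forall a x, teq2 (delta (bm_r x a)) (tr (delta x) a)) /\
  (forall c, teq3 (delta_l delta (delta c)) (delta_r delta (delta c))) /\
  bimod_mapA eps /\
  (forall c, \sum_(p <- delta c) bm_l (eps p.1) p.2 = c) /\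
  (forall c, \sum_(p <- delta c) bm_r p.1 (eps p.2) = c).

Record coring := Coring {
  co_car :> bimod;
  co_delta : co_car -> seq (co_car * co_car);
  co_eps : co_car -> A;
  co_ax : is_coring co_delta co_eps
}.

Definition coring_map (C D : coring) (f : C -> D) : Prop :=
  [/\ bimod_map f,
      forall c, teq2 (@co_delta D (f c)) (tmap2 f f (@co_delta C c))
    & forall c, @co_eps D (f c) = @co_eps C c].

Definition coring_iso (C D : coring) : Prop :=
  exists (f : C -> D) (g : D -> C),
    [/\ coring_map f, coring_map g, cancel f g & cancel g f].

Definition conv (C : coring) (f g : C -> A) (c : C) : A :=
  \sum_(p <- @co_delta C c) f p.1 * g p.2.

Definition conv_invertible (C : coring) (f : C -> A) : Prop :=
  exists g : C -> A, [/\ bimod_mapA g,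
    forall c, conv f g c = @co_eps C c & forall c, conv g f c = @co_eps C c].

Definition twisting_datum (C D : coring) (l : D -> C) (r : C -> D)
  (theta : D -> C) (thetainv : C -> D) : Prop :=
  coring_map l /\ coring_map r /\
  bimod_map theta /\ cancel theta thetainv /\ cancel thetainv theta /\
  (forall d, teq2 (tmap2 id theta (@co_delta D d))
                  (tmap2 r id (@co_delta C (theta d)))) /\
  (forall d, teq2 (tmap2 theta id (tmap2 id l (@co_delta D d)))
                  (@co_delta C (theta d))).

End Corings.

(* Main.v *)
Require Import Defs.
From HB Require Import structures.
From mathcomp Require Import all_boot all_algebra.
Set Implicit Arguments. Unset Strict Implicit. Unset Printing Implicit Defensive.
Import GRing.Theory.
Local Open Scope ring_scope.

Section Aux.
Variables (k : comPzRingType) (A : algType k).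

Lemma dbl0 (V : zmodType) (x : V) : x = x + x -> x = 0.
Proof. move=> h; have := congr1 (fun y => y - x) h; rewrite subrr addrK => <-. by []. Qed.

Lemma teq2_sum (M N : bimod A) (V : zmodType) (F : M -> N -> V) :
 (forall m m' n, F (m+m') n = F m n + F m' n) ->
 (forall m n n', F m (n+n') = F m n + F m n') ->
 (forall m a n, F (bm_r m a) n = F m (bm_l a n)) ->
 forall s t, teq2 s t -> \sum_(p <- s) F p.1 p.2 = \sum_(p <- t) F p.1 p.2.
Proof.
move=> H1 H2 H3 s t; elim => {s t}.
- by [].
- by move=> s t _ ->.
- by move=> s t u _ -> _ ->.
- by move=> s s' t t' _ h1 _ h2; rewrite !big_cat h1 h2.
- by move=> s t; rewrite !big_cat; apply: addrC.
- by move=> m m' n; rewrite !big_cons !big_nil /= H1 !addr0.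
- by move=> m n n'; rewrite !big_cons !big_nil /= H2 !addr0.
- move=> n; rewrite big_cons !big_nil /= addr0; apply: dbl0.
  by rewrite -H1 addr0.
- move=> m; rewrite big_cons !big_nil /= addr0; apply: dbl0.
  by rewrite -H2 addr0.
- by move=> m a n; rewrite !big_cons !big_nil /= H3.
Qed.

Lemma teq3_sum (M N P : bimod A) (V : zmodType) (F : M -> N -> P -> V) :
 (forall m m' n p, F (m+m') n p = F m n p + F m' n p) ->
 (forall m n n' p, F m (n+n') p = F m n p + F m n' p) ->
 (forall m n p p', F m n (p+p') = F m n p + F m n p') ->
 (forall m a n p, F (bm_r m a) n p = F m (bm_l a n) p) ->
 (forall m n a p, F m (bm_r n a) p = F m n (bm_l a p)) ->
 forall s t, teq3 s t ->
   \sum_(q <- s) F q.1.1 q.1.2 q.2 = \sum_(q <- t) F q.1.1 q.1.2 q.2.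
Proof.
move=> H1 H2 H3 H4 H5 s t; elim => {s t}.
- by [].
- by move=> s t _ ->.
- by move=> s t u _ -> _ ->.
- by move=> s s' t t' _ h1 _ h2; rewrite !big_cat h1 h2.
- by move=> s t; rewrite !big_cat; apply: addrC.
- by move=> *; rewrite !big_cons !big_nil /= H1 !addr0.
- by move=> *; rewrite !big_cons !big_nil /= H2 !addr0.
- by move=> *; rewrite !big_cons !big_nil /= H3 !addr0.
- move=> n p; rewrite big_cons !big_nil /= addr0; apply: dbl0.
  by rewrite -H1 addr0.
- move=> n p; rewrite big_cons !big_nil /= addr0; apply: dbl0.
  by rewrite -H2 addr0.
- move=> n p; rewrite big_cons !big_nil /= addr0; apply: dbl0.
  by rewrite -H3 addr0.
- by move=> *; rewrite !big_cons !big_nil /= H4.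
- by move=> *; rewrite !big_cons !big_nil /= H5.
Qed.

Lemma bimod_map0 (M N : bimod A) (f : M -> N) : bimod_map f -> f 0 = 0.
Proof. by case=> h _ _; apply: dbl0; rewrite -h addr0. Qed.

Lemma teq2_map (M N M' N' : bimod A) (f : M -> M') (g : N -> N') :
  bimod_map f -> bimod_map g ->
  forall s t, teq2 s t -> teq2 (tmap2 f g s) (tmap2 f g t).
Proof.
move=> hf hg; have f0 := bimod_map0 hf; have g0 := bimod_map0 hg.
case: hf => fD fl fr; case: hg => gD gl gr.
move=> s t; elim => {s t}.
- by move=> s; apply: teq2_refl.
- by move=> s t _ h; apply: teq2_sym.
- by move=> s t u _ h1 _ h2; apply: teq2_trans h2.
- by move=> s s' t t' _ h1 _ h2; rewrite /tmap2 !map_cat; apply: teq2_cat.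
- by move=> s t; rewrite /tmap2 !map_cat; apply: teq2_comm.
- by move=> m m' n; rewrite /tmap2 /= fD; apply: teq2_addl.
- by move=> m n n'; rewrite /tmap2 /= gD; apply: teq2_addr.
- by move=> n; rewrite /tmap2 /= f0; apply: teq2_zerol.
- by move=> m; rewrite /tmap2 /= g0; apply: teq2_zeror.
- by move=> m a n; rewrite /tmap2 /= fr gl; apply: teq2_bal.
Qed.

Lemma bm_r0 (M : bimod A) (m : M) : bm_r m 0 = 0.
Proof. by apply: dbl0; rewrite -bm_rDa addr0. Qed.

Lemma bm_0r (M : bimod A) (a : A) : bm_r (0 : M) a = 0.
Proof. by apply: dbl0; rewrite -bm_rD addr0. Qed.

Lemma bm_r_sum (M : bimod A) (m : M) (I : Type) (s : seq I) (h : I -> A) :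
  bm_r m (\sum_(i <- s) h i) = \sum_(i <- s) bm_r m (h i).
Proof. elim: s => [|x s IH]; first by rewrite !big_nil bm_r0.
by rewrite !big_cons bm_rDa IH. Qed.

Lemma bm_sum_r (M : bimod A) (a : A) (I : Type) (s : seq I) (h : I -> M) :
  bm_r (\sum_(i <- s) h i) a = \sum_(i <- s) bm_r (h i) a.
Proof. elim: s => [|x s IH]; first by rewrite !big_nil bm_0r.
by rewrite !big_cons bm_rD IH. Qed.

Lemma map_sum (M N : bimod A) (f : M -> N) (I : Type) (s : seq I) (h : I -> M) :
  bimod_map f -> f (\sum_(i <- s) h i) = \sum_(i <- s) f (h i).
Proof. move=> hf; have f0 := bimod_map0 hf; case: hf => fD _ _.
elim: s => [|x s IH]; first by rewrite !big_nil f0.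
by rewrite !big_cons fD IH. Qed.


Definition Rf (D : coring A) (f : D -> A) (d : D) : D :=
  \sum_(p <- co_delta d) bm_r p.1 (f p.2).

Lemma Rf_teq (D : coring A) (f : D -> A) : bimod_mapA f ->
  forall s t : seq (D * D), teq2 s t ->
  \sum_(p <- s) bm_r p.1 (f p.2) = \sum_(p <- t) bm_r p.1 (f p.2).
Proof.
case=> fD fl fr; apply: (teq2_sum (F := fun m n => bm_r m (f n))).
- by move=> *; rewrite bm_rD.
- by move=> *; rewrite fD bm_rDa.
- by move=> m a n; rewrite fl bm_rM.
Qed.

Lemma Rf_add (D : coring A) (f : D -> A) : bimod_mapA f ->
  forall x y, Rf f (x + y) = Rf f x + Rf f y.
Proof.
move=> hf x y; case: (co_ax D) => HD _.
by rewrite /Rf (Rf_teq hf (HD x y)) big_cat.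
Qed.

Lemma Rf_sum (D : coring A) (f : D -> A) (I : Type) (s : seq I) (h : I -> D) :
  bimod_mapA f -> Rf f (\sum_(i <- s) h i) = \sum_(i <- s) Rf f (h i).
Proof.
move=> hf; have f0 : Rf f 0 = 0 by apply: dbl0; rewrite -Rf_add // addr0.
elim: s => [|x s IH]; first by rewrite !big_nil f0.
by rewrite !big_cons Rf_add // IH.
Qed.

Lemma Rf_r (D : coring A) (g : D -> A) (m : D) (a : A) : bimod_mapA g ->
  Rf g (bm_r m a) = \sum_(q <- co_delta m) bm_r q.1 (g q.2 * a).
Proof.
move=> hg; case: (co_ax D) => _ [_ [HR _]].
rewrite /Rf (Rf_teq hg (HR a m)) /tr big_map /=.
by apply: eq_bigr => q _; case: hg => _ _ ->.
Qed.

Lemma Rf_inv (D : coring A) (f g : D -> A) : bimod_mapA f -> bimod_mapA g ->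
  (forall c, conv g f c = co_eps c) -> forall d, Rf g (Rf f d) = d.
Proof.
move=> hf hg hc d; case: (co_ax D) => _ [_ [_ [Hco [_ [_ Hc2]]]]].
rewrite {2}/Rf Rf_sum //.
under eq_bigr => p _ do rewrite Rf_r //.
have E := teq3_sum (F := fun x y z => bm_r x (g y * f z)) _ _ _ _ _ (Hco d).
rewrite /delta_l /delta_r !big_flatten !big_map /= in E.
have E1 : forall p : D * D, \sum_(i <- [seq (q.1, q.2, p.2) | q <- co_delta p.1]) bm_r i.1.1 (g i.1.2 * f i.2)
  = \sum_(q <- co_delta p.1) bm_r q.1 (g q.2 * f p.2) by move=> p; rewrite big_map.
have E2 : forall p : D * D, \sum_(i <- [seq (p.1, q.1, q.2) | q <- co_delta p.2]) bm_r i.1.1 (g i.1.2 * f i.2)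
  = \sum_(q <- co_delta p.2) bm_r p.1 (g q.1 * f q.2) by move=> p; rewrite big_map.
rewrite (eq_bigr _ (fun p _ => E1 p)) (eq_bigr _ (fun p _ => E2 p)) in E.
rewrite E.
- rewrite -[RHS]Hc2; apply: eq_bigr => p _.
  by rewrite -hc /conv bm_r_sum.
- by move=> *; rewrite bm_rD.
- by move=> *; case: hg => gD _ _; rewrite gD mulrDl bm_rDa.
- by move=> *; case: hf => fD _ _; rewrite fD mulrDr bm_rDa.
- by move=> m a n p /=; case: hg => _ gl _; rewrite gl -bm_rM mulrA.
- by move=> m n a p /=; case: hg => _ _ gr; case: hf => _ fl _; rewrite gr fl mulrA.
Qed.
End Aux.

Theorem lemma5p1 (k : comPzRingType) (A : algType k) (C D : coring A)
  (l : D -> C) (r : C -> D) (theta : D -> C) (thetainv : C -> D) :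
  twisting_datum l r theta thetainv ->
  conv_invertible (fun c : C => @co_eps _ _ D (thetainv c)) ->
  conv_invertible (fun d : D => @co_eps _ _ C (theta d)) ->
  coring_iso C D.
Proof.
move=> [lmap [rmap [thb [tK [tiK [Hleft _]]]]]] _ [phi' [hphi' c1 c2]].
set phi := fun d : D => co_eps (theta d).
case: (co_ax C) => _ [_ [_ [_ [epsC [_ Hc2C]]]]].
have hphi : bimod_mapA phi.
  case: thb => tD tl tr; case: epsC => eD el er.
  by split=> *; rewrite /phi ?tD ?tl ?tr ?eD ?el ?er.
have rb := rmap; case: rb => rb rdelta reps.
have key : forall d, r (theta d) = Rf phi d.
  move=> d.
  have E := teq2_sum (F := fun (x : D) (y : C) => bm_r x (co_eps y)) _ _ _ (Hleft d).
  rewrite /tmap2 !big_map /= in E.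
  rewrite /Rf E.
  - rewrite -{1}(Hc2C (theta d)) map_sum //.
    by apply: eq_bigr => q _; case: rb => _ _ ->.
  - by move=> *; rewrite bm_rD.
  - by move=> *; case: epsC => eD _ _; rewrite eD bm_rDa.
  - by move=> m a n /=; case: epsC => _ el _; rewrite el bm_rM.
set g := fun d => theta (Rf phi' d).
have rg : cancel g r by move=> d; rewrite /g key Rf_inv.
have gr : cancel r g.
  by move=> c; rewrite /g -{1}(tiK c) key Rf_inv.
have gb : bimod_map g.
  split.
  - move=> m m'; apply: (can_inj gr).
    by rewrite rg; case: rb => rD _ _; rewrite rD !rg.
  - move=> a m; apply: (can_inj gr).
    by rewrite rg; case: rb => _ rl _; rewrite rl !rg.
  - move=> a m; apply: (can_inj gr).
    by rewrite rg; case: rb => _ _ rr; rewrite rr !rg.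
exists r, g; split=> //.
split=> //.
- move=> d; have := rdelta (g d); rewrite rg => E.
  have := teq2_map gb gb E.
  rewrite /tmap2 -map_comp (eq_map (g := id)); last by case=> x y /=; rewrite !gr.
  by rewrite map_id => h; apply: teq2_sym.
- by move=> d; rewrite -reps rg.
Qed.
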